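(* Let $a>0$, let $q$ be a continuous complex-valued function on $[-a,a]$, and for $h\in\mathbb{C}$ let $\mathbf{T}_h$ be the operator on $C[-a,a]$ defined in the context. Then for all $h_1,h_2\in\mathbb{C}$ and every $u\in C[-a,a]$, \[ \mathbf{T}_{h_2}u=\mathbf{T}_{h_1}\Big[u(x)+\frac{h_2-h_1}{2}\int_{-x}^{x}u(t)\,dt\Big]. \] In particular, with $T=\mathbf{T}_0$, \[ \mathbf{T}_{h}u=T\Big[u(x)+\frac{h}{2}\int_{-x}^{x}u(t)\,dt\Big]\quad\text{for all } h\in\mathbb{C},\ u\in C[-a,a]. \]
   Context: Let $H(u,v)$ be the unique (continuous) solution of the Goursat problem \[ \frac{\partial^2 H(u,v)}{\partial u\,\partial v}=q(u+v)H(u,v),\qquad H(u,0)=\frac12\int_0^u q(s)\,ds,\qquad H(0,v)=0, \] and put $K(x,t)=H\big(\tfrac{x+t}{2},\tfrac{x-t}{2}\big)$ for $-a\le x\le a$, $|t|\le|x|$. For $h\in\mathbb{C}$ define \[ \mathbf{K}(x,t;h)=\frac h2+K(x,t)+\frac h2\int_t^x\big(K(x,s)-K(x,-s)\big)\,ds, \qquad \mathbf{T}_h u(x)=u(x)+\int_{-x}^{x}\mathbf{K}(x,t;h)\,u(t)\,dt . \] Note $\mathbf{K}(x,t;0)=K(x,t)$, and $T:=\mathbf{T}_0$. *)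

(* Defs.v *)
From Stdlib Require Import Reals.
From Coquelicot Require Import Coquelicot.
Open Scope R_scope.

Definition CInt (f : R -> C) (a b : R) : C := @RInt C_R_CompleteNormedModule f a b.

Definition inI (a x : R) : Prop := - a <= x <= a.

Definition contOn (a : R) (f : R -> C) : Prop :=
  forall x, inI a x -> filterlim f (within (inI a) (locally x)) (locally (f x)).

(* Domain of the Goursat problem in the characteristic variables (u,v):
   u = (x+t)/2, v = (x-t)/2 with -a <= x <= a, |t| <= |x|,
   i.e. |u+v| <= a and u v >= 0. *)
Definition GDom (a u v : R) : Prop := Rabs (u + v) <= a /\ 0 <= u * v.

(* Its interior (where the PDE is required to hold classically). *)
Definition GInt (a u v : R) : Prop :=
  (0 < u /\ 0 < v /\ u + v < a) \/ (u < 0 /\ v < 0 /\ - a < u + v).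

(* H is a (continuous) solution of the Goursat problem
     d^2 H / du dv = q(u+v) H,  H(u,0) = 1/2 int_0^u q,  H(0,v) = 0. *)
Definition GoursatSol (a : R) (q : R -> C) (H : R -> R -> C) : Prop :=
  (forall u v, GDom a u v ->
     filterlim (fun p : R * R => H (fst p) (snd p))
       (within (fun p : R * R => GDom a (fst p) (snd p)) (locally (u, v)))
       (locally (H u v))) /\
  (exists Hv : R -> R -> C, forall u v, GInt a u v ->
     @is_derive R_AbsRing C_R_NormedModule (fun v' => H u v') v (Hv u v) /\
     @is_derive R_AbsRing C_R_NormedModule (fun u' => Hv u' v) u
        (Cmult (q (u + v)) (H u v))) /\
  (forall u, inI a u -> H u 0 = ((1 / 2) * CInt q 0 u)%C) /\
  (forall v, inI a v -> H 0 v = 0%C).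

Definition Kker (H : R -> R -> C) (x t : R) : C := H ((x + t) / 2) ((x - t) / 2).

Definition Kh (H : R -> R -> C) (h : C) (x t : R) : C :=
  (h / 2 + Kker H x t
   + h / 2 * CInt (fun s => Kker H x s - Kker H x (- s)) t x)%C.

Definition Th (H : R -> R -> C) (h : C) (u : R -> C) (x : R) : C :=
  (u x + CInt (fun t => Kh H h x t * u t) (- x) x)%C.

(* Main.v *)
Require Import Defs.
From Stdlib Require Import Reals.
From Coquelicot Require Import Coquelicot.
From Stdlib Require Import Lra.
Open Scope R_scope.

Lemma Ceq (x y : C) : fst x = fst y -> snd x = snd y -> x = y.
Proof. destruct x, y; simpl; intros; subst; reflexivity. Qed.

Lemma scalC (r : R) (z : C) : @scal _ C_R_NormedModule r z = (r * fst z, r * snd z).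
Proof. destruct z. reflexivity. Qed.

Lemma cont_pair (f g : R -> R) t :
  continuous f t -> continuous g t ->
  @continuous R_UniformSpace (prod_UniformSpace R_UniformSpace R_UniformSpace)
     (fun s => (f s, g s)) t.
Proof.
  intros Hf Hg P [eps Heps].
  assert (H1 : locally t (fun s => ball (f t) eps (f s))) by exact (Hf (ball (f t) eps) (locally_ball _ _)).
  assert (H2 : locally t (fun s => ball (g t) eps (g s))) by exact (Hg (ball (g t) eps) (locally_ball _ _)).
  unfold filtermap. generalize (filter_and _ _ H1 H2). apply filter_imp.
  intros s [Hs1 Hs2]. apply Heps. split; assumption.
Qed.

Lemma contC (f : R -> C) t :
  continuous (fun s => fst (f s)) t -> continuous (fun s => snd (f s)) t ->
  @continuous R_UniformSpace C_R_NormedModule f t.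
Proof.
  intros H1 H2. generalize (cont_pair _ _ t H1 H2).
  apply filterlim_ext. intros s; destruct (f s); reflexivity.
Qed.

Lemma contC_fst (f : R -> C) t : @continuous R_UniformSpace C_R_NormedModule f t ->
  continuous (fun s => fst (f s)) t.
Proof. intros H. apply (continuous_comp f fst). exact H. apply continuous_fst. Qed.
Lemma contC_snd (f : R -> C) t : @continuous R_UniformSpace C_R_NormedModule f t ->
  continuous (fun s => snd (f s)) t.
Proof. intros H. apply (continuous_comp f snd). exact H. apply continuous_snd. Qed.

Ltac csplit := apply contC; [apply contC_fst|apply contC_snd]; assumption.

Lemma rcont_plus (f g : R -> R) t : continuous f t -> continuous g t -> continuous (fun s => f s + g s) t.
Proof. intros. apply (@continuous_plus R_UniformSpace R_AbsRing R_NormedModule f g t); assumption. Qed.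
Lemma rcont_minus (f g : R -> R) t : continuous f t -> continuous g t -> continuous (fun s => f s - g s) t.
Proof. intros. apply (@continuous_minus R_UniformSpace R_AbsRing R_NormedModule f g t); assumption. Qed.
Lemma rcont_mult (f g : R -> R) t : continuous f t -> continuous g t -> continuous (fun s => f s * g s) t.
Proof. intros. apply (@continuous_mult R_UniformSpace R_AbsRing f g t); assumption. Qed.
Lemma rcont_opp (f : R -> R) t : continuous f t -> continuous (fun s => - f s) t.
Proof. intros. apply (@continuous_opp R_UniformSpace R_AbsRing R_NormedModule f t); assumption. Qed.

Definition ccont (f : R -> C) t := @continuous R_UniformSpace C_R_NormedModule f t.

Lemma ccont_plus f g t : ccont f t -> ccont g t -> ccont (fun s => (f s + g s)%C) t.
Proof. intros Hf Hg. apply contC; simpl.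
  apply rcont_plus; [apply contC_fst|apply contC_fst]; assumption.
  apply rcont_plus; [apply contC_snd|apply contC_snd]; assumption. Qed.
Lemma ccont_minus f g t : ccont f t -> ccont g t -> ccont (fun s => (f s - g s)%C) t.
Proof. intros Hf Hg. apply contC; simpl.
  apply rcont_plus; [apply contC_fst|apply rcont_opp; apply contC_fst]; assumption.
  apply rcont_plus; [apply contC_snd|apply rcont_opp; apply contC_snd]; assumption. Qed.
Lemma ccont_mult f g t : ccont f t -> ccont g t -> ccont (fun s => (f s * g s)%C) t.
Proof. intros Hf Hg. apply contC; simpl.
  apply rcont_minus; apply rcont_mult; first [apply contC_fst|apply contC_snd]; assumption.
  apply rcont_plus; apply rcont_mult; first [apply contC_fst|apply contC_snd]; assumption. Qed.
Lemma ccont_opp f t : ccont f t -> ccont (fun s => (- f s)%C) t.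
Proof. intros Hf. apply contC; simpl; apply rcont_opp; [apply contC_fst|apply contC_snd]; assumption. Qed.
Lemma ccont_const (c : C) t : ccont (fun _ => c) t.
Proof. apply continuous_const. Qed.
Lemma ccont_comp (f : R -> C) (g : R -> R) t : continuous g t -> ccont f (g t) -> ccont (fun s => f (g s)) t.
Proof. intros. apply (continuous_comp g f); assumption. Qed.
Lemma rcont_neg t : continuous (fun s : R => - s) t.
Proof. apply rcont_opp. apply continuous_id. Qed.

Definition cder (f : R -> C) t (d : C) := @is_derive R_AbsRing C_R_NormedModule f t d.

Lemma cder_fst f t d : cder f t d -> is_derive (fun s => fst (f s)) t (fst d).
Proof.
  intros H. unfold cder, is_derive in *.
  apply filterdiff_ext_lin with (fun y => fst (@scal _ C_R_NormedModule y d)).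
  apply (@filterdiff_comp R_AbsRing R_NormedModule C_R_NormedModule R_NormedModule _ _ f fst _ fst H).
  apply filterdiff_linear. apply (@is_linear_fst R_AbsRing R_NormedModule R_NormedModule).
  intros y. destruct d. reflexivity.
Qed.
Lemma cder_snd f t d : cder f t d -> is_derive (fun s => snd (f s)) t (snd d).
Proof.
  intros H. unfold cder, is_derive in *.
  apply filterdiff_ext_lin with (fun y => snd (@scal _ C_R_NormedModule y d)).
  apply (@filterdiff_comp R_AbsRing R_NormedModule C_R_NormedModule R_NormedModule _ _ f snd _ snd H).
  apply filterdiff_linear. apply (@is_linear_snd R_AbsRing R_NormedModule R_NormedModule).
  intros y. destruct d. reflexivity.
Qed.
Lemma cder_pair f t d : is_derive (fun s => fst (f s)) t (fst d) -> is_derive (fun s => snd (f s)) t (snd d) -> cder f t d.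
Proof.
  intros H1 H2.
  assert (H := @is_derive_plus R_AbsRing C_R_NormedModule _ _ t _ _
     (@is_derive_scal_l R_AbsRing C_R_NormedModule _ t _ (RtoC 1) H1)
     (@is_derive_scal_l R_AbsRing C_R_NormedModule _ t _ (0, 1) H2)).
  unfold cder.
  replace d with (@plus C_R_NormedModule (@scal _ C_R_NormedModule (fst d) (RtoC 1)) (@scal _ C_R_NormedModule (snd d) (0,1))).
  revert H. apply is_derive_ext. intros s. rewrite !scalC. apply Ceq; simpl; unfold plus, mult; simpl; ring.
  rewrite !scalC. apply Ceq; simpl; unfold plus, mult; simpl; ring.
Qed.

Lemma cder_mult f g t df dg : cder f t df -> cder g t dg -> cder (fun s => (f s * g s)%C) t (df * g t + f t * dg)%C.
Proof.
  intros Hf Hg.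
  apply cder_fst in Hf as Hf1. apply cder_snd in Hf as Hf2.
  apply cder_fst in Hg as Hg1. apply cder_snd in Hg as Hg2.
  apply cder_pair; simpl.
  - replace (fst df * fst (g t) - snd df * snd (g t) + (fst (f t) * fst dg - snd (f t) * snd dg))
      with ((fst df * fst (g t) + fst (f t) * fst dg) - (snd df * snd (g t) + snd (f t) * snd dg)) by ring.
    apply (@is_derive_minus R_AbsRing R_NormedModule).
    apply (is_derive_mult (K:=R_AbsRing)); auto. intros; apply Rmult_comm.
    apply (is_derive_mult (K:=R_AbsRing)); auto. intros; apply Rmult_comm.
  - replace (fst df * snd (g t) + snd df * fst (g t) + (fst (f t) * snd dg + snd (f t) * fst dg))
      with ((fst df * snd (g t) + fst (f t) * snd dg) + (snd df * fst (g t) + snd (f t) * fst dg)) by ring.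
    apply (@is_derive_plus R_AbsRing R_NormedModule).
    apply (is_derive_mult (K:=R_AbsRing)); auto. intros; apply Rmult_comm.
    apply (is_derive_mult (K:=R_AbsRing)); auto. intros; apply Rmult_comm.
Qed.

Definition cisint (f : R -> C) a b (l : C) := @is_RInt C_R_NormedModule f a b l.

Lemma cisint_fst f a b l : cisint f a b l -> is_RInt (fun t => fst (f t)) a b (fst l).
Proof. intros H. apply (@is_RInt_fct_extend_fst R_NormedModule R_NormedModule f a b l H). Qed.
Lemma cisint_snd f a b l : cisint f a b l -> is_RInt (fun t => snd (f t)) a b (snd l).
Proof. intros H. apply (@is_RInt_fct_extend_snd R_NormedModule R_NormedModule f a b l H). Qed.
Lemma cisint_pair f a b l : is_RInt (fun t => fst (f t)) a b (fst l) -> is_RInt (fun t => snd (f t)) a b (snd l) -> cisint f a b l.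
Proof. intros H1 H2. destruct l as [l1 l2].
  apply (@is_RInt_fct_extend_pair R_NormedModule R_NormedModule f a b l1 l2 H1 H2). Qed.

Lemma ris_plus (f g : R -> R) a b lf lg : is_RInt f a b lf -> is_RInt g a b lg -> is_RInt (fun t => f t + g t) a b (lf + lg).
Proof. intros. apply (@is_RInt_plus R_NormedModule); assumption. Qed.
Lemma ris_minus (f g : R -> R) a b lf lg : is_RInt f a b lf -> is_RInt g a b lg -> is_RInt (fun t => f t - g t) a b (lf - lg).
Proof. intros. apply (@is_RInt_minus R_NormedModule); assumption. Qed.
Lemma ris_scal (f : R -> R) a b k lf : is_RInt f a b lf -> is_RInt (fun t => k * f t) a b (k * lf).
Proof. intros. apply (@is_RInt_scal R_NormedModule); assumption. Qed.

Lemma cisint_plus f g a b lf lg : cisint f a b lf -> cisint g a b lg -> cisint (fun t => (f t + g t)%C) a b (lf + lg)%C.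
Proof. intros. apply (@is_RInt_plus C_R_NormedModule); assumption. Qed.
Lemma cisint_minus f g a b lf lg : cisint f a b lf -> cisint g a b lg -> cisint (fun t => (f t - g t)%C) a b (lf - lg)%C.
Proof. intros. apply (@is_RInt_minus C_R_NormedModule); assumption. Qed.
Lemma cisint_mult_l (c : C) f a b l : cisint f a b l -> cisint (fun t => (c * f t)%C) a b (c * l)%C.
Proof.
  intros H. apply cisint_fst in H as H1. apply cisint_snd in H as H2.
  apply cisint_pair; simpl.
  apply ris_minus; apply ris_scal; assumption.
  apply ris_plus; apply ris_scal; assumption.
Qed.
Lemma cisint_ext f g a b l : (forall t, f t = g t) -> cisint f a b l -> cisint g a b l.
Proof. intros. apply (is_RInt_ext f g); auto. Qed.

Lemma cint_unique f a b l : cisint f a b l -> CInt f a b = l.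
Proof. intros. apply (@is_RInt_unique C_R_CompleteNormedModule). exact H. Qed.

Lemma cint_correct f a b : (forall z, ccont f z) -> cisint f a b (CInt f a b).
Proof. intros. apply (@RInt_correct C_R_CompleteNormedModule).
  apply (@ex_RInt_continuous C_R_CompleteNormedModule). intros; apply H. Qed.

Lemma cint_refl f x : (forall z, ccont f z) -> CInt (fun t => f (- t)) (- x) x = CInt f (- x) x.
Proof.
  intros Hc. apply cint_unique.
  assert (H0 := cint_correct f (-x) x Hc).
  assert (H1 := @is_RInt_swap C_R_NormedModule f x (-x) _ H0).
  assert (H1' : @is_RInt C_R_NormedModule f (-1 * (-x) + 0) (-1 * x + 0) (opp (CInt f (- x) x))).
  { replace (-1 * (-x) + 0) with x by ring. replace (-1 * x + 0) with (-x) by ring. exact H1. }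
  assert (H2 := @is_RInt_comp_lin C_R_NormedModule f (-1) 0 (-x) x _ H1').
  assert (H3 := @is_RInt_scal C_R_NormedModule _ (-x) x (-1) _ H2).
  replace (CInt f (- x) x) with (@scal _ C_R_NormedModule (-1) (opp (CInt f (- x) x))).
  2:{ rewrite !scalC. apply Ceq; simpl; ring. }
  revert H3. apply cisint_ext. intros t.
  replace (-1 * t + 0) with (- t) by ring. rewrite !scalC. apply Ceq; simpl; ring.
Qed.

Lemma cint_odd f x : (forall z, ccont f z) -> (forall t, f (- t) = (- f t)%C) -> CInt f (- x) x = RtoC 0.
Proof.
  intros Hc Ho. assert (E := cint_refl f x Hc).
  assert (E2 : CInt (fun t => f (- t)) (- x) x = (- CInt f (-x) x)%C).
  { apply cint_unique. eapply cisint_ext. intros t; symmetry; apply Ho.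
    apply (@is_RInt_opp C_R_NormedModule). apply cint_correct; auto. }
  rewrite E2 in E. destruct (CInt f (-x) x) as [p q]. injection E; intros.
  apply Ceq; simpl; lra.
Qed.

Lemma ccont_neg f z : (forall w, ccont f w) -> ccont (fun s => f (- s)) z.
Proof. intros H. apply (ccont_comp f (fun s => - s)). apply rcont_neg. apply H. Qed.

Lemma cder_cont f z d : cder f z d -> ccont f z.
Proof. intros H. apply (@ex_derive_continuous R_AbsRing C_R_NormedModule). exists d; exact H. Qed.

Lemma derU (u : R -> C) z : (forall w, ccont u w) ->
  cder (fun y => CInt u (- y) y) z (u z + u (- z)%R)%C.
Proof.
  intros Hu.
  assert (H := @is_derive_RInt_bound_comp C_R_NormedModule u (fun a b => CInt u a b) (fun s => - s) (fun s => s) (-1) 1 z).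
  unfold cder.
  replace (u z + u (- z)%R)%C with (@minus C_R_NormedModule (@scal _ C_R_NormedModule 1 (u z)) (@scal _ C_R_NormedModule (-1) (u (- z)))).
  apply H.
  - apply filter_forall. intros w. apply cint_correct. exact Hu.
  - apply Hu.
  - apply Hu.
  - apply (@is_derive_opp R_AbsRing R_NormedModule (fun s => s) z 1). apply (@is_derive_id R_AbsRing).
  - apply (@is_derive_id R_AbsRing).
  - rewrite !scalC. apply Ceq; simpl; unfold plus, opp, mult; simpl; ring.
Qed.

Lemma derF (D : R -> C) x t : (forall w, ccont D w) ->
  cder (fun s => CInt D s x) t (- D t)%C.
Proof.
  intros HD. unfold cder.
  apply (@is_derive_RInt' C_R_NormedModule D (fun s => CInt D s x) t x).
  apply filter_forall. intros w. apply cint_correct. exact HD.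
  apply HD.
Qed.

Lemma cex f a b : (forall z, ccont f z) -> @ex_RInt C_R_NormedModule f a b.
Proof. intros H. eexists. apply cint_correct. exact H. Qed.

Ltac cc := repeat first [
   match goal with H : forall z, ccont ?f z |- ccont ?f _ => apply H end
 | match goal with |- ccont (fun s => ?f (- s)%R) _ => apply (ccont_neg f); intros end
 | match goal with |- ccont (fun s => (_ + _)%C) _ => apply ccont_plus end
 | match goal with |- ccont (fun s => (_ - _)%C) _ => apply ccont_minus end
 | match goal with |- ccont (fun s => (_ * _)%C) _ => apply ccont_mult end
 | match goal with |- ccont (fun s => (- _)%C) _ => apply ccont_opp end
 | apply ccont_const ].

Lemma Cdouble0 (z : C) : (z + z)%C = RtoC 0 -> z = RtoC 0.
Proof. destruct z as [p q]. intros E. injection E; intros. apply Ceq; simpl in *; lra. Qed.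

Lemma general (x : R) (u k : R -> C) (h1 h2 : C) :
  (forall z, ccont u z) -> (forall z, ccont k z) ->
  (u x + CInt (fun t => (h2 / 2 + k t + h2 / 2 * CInt (fun s => k s - k (- s)%R) t x) * u t) (- x) x)%C
  = (u x + (h2 - h1) / 2 * CInt u (- x) x
     + CInt (fun t => (h1 / 2 + k t + h1 / 2 * CInt (fun s => k s - k (- s)%R) t x)
                      * (u t + (h2 - h1) / 2 * CInt u (- t)%R t)) (- x) x)%C.
Proof.
  intros Hu Hk.
  pose (U := fun y => CInt u (- y) y).
  pose (D := fun s => (k s - k (- s)%R)%C).
  pose (F := fun t => CInt D t x).
  change (u x + CInt (fun t => (h2/2 + k t + h2/2 * F t) * u t) (-x) x
    = u x + (h2-h1)/2 * U x + CInt (fun t => (h1/2 + k t + h1/2*F t) * (u t + (h2-h1)/2 * U t)) (-x) x)%C.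
  assert (HD : forall z, ccont D z) by (intros; unfold D; cc).
  assert (HU : forall z, ccont U z) by (intros; eapply cder_cont; apply derU; exact Hu).
  assert (HF : forall z, ccont F z) by (intros; eapply cder_cont; apply derF; exact HD).
  assert (Dodd : forall s, D (- s) = (- D s)%C).
  { intros s. unfold D. rewrite Ropp_involutive. ring. }
  assert (Uodd : forall t, U (- t) = (- U t)%C).
  { intros t. unfold U. rewrite Ropp_involutive.
    rewrite <- (@opp_RInt_swap C_R_CompleteNormedModule). reflexivity. apply cex; exact Hu. }
  assert (Feven : forall t, F (- t) = F t).
  { intros t. unfold F. transitivity (CInt D (- t) t + CInt D t x)%C.
    symmetry. apply (@RInt_Chasles C_R_CompleteNormedModule D (-t) t x).
    apply cex; exact HD. apply cex; exact HD.
    rewrite (cint_odd D t HD Dodd). ring. }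
  assert (Fx : F x = RtoC 0).
  { unfold F. apply (@RInt_point C_R_CompleteNormedModule). }
  assert (B1 : CInt U (- x) x = RtoC 0).
  { apply cint_odd. exact HU. exact Uodd. }
  assert (B3 : CInt (fun t => F t * U t)%C (- x) x = RtoC 0).
  { apply cint_odd. intros; cc. intros t. rewrite Feven, Uodd. ring. }
  assert (Key : CInt (fun t => F t * u t)%C (- x) x = CInt (fun t => k t * U t)%C (- x) x).
  { pose (dP := fun t => ((- D t) * U t + F t * (u t + u (- t)%R))%C).
    assert (HP : cisint dP (- x) x (@minus C_R_NormedModule (F x * U x)%C (F (- x)%R * U (- x)%R)%C)).
    { apply (@is_RInt_derive C_R_CompleteNormedModule (fun t => (F t * U t)%C) dP).
      - intros t _. exact (cder_mult _ _ t _ _ (derF D x t HD) (derU u t Hu)).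
      - intros t _. change (ccont dP t). unfold dP. cc. }
    rewrite Feven, Fx in HP.
    assert (C1 : CInt (fun t => k (- t)%R * U t)%C (- x) x = (- CInt (fun t => k t * U t)%C (- x) x)%C).
    { rewrite <- (cint_refl (fun t => k t * U t)%C x) by (intros; cc).
      apply cint_unique. apply (cisint_ext (fun t => - (k (- t)%R * U (- t)%R))%C).
      intros t. rewrite Uodd. ring.
      apply (@is_RInt_opp C_R_NormedModule). apply cint_correct. intros; cc. }
    assert (C2 : CInt (fun t => F t * u (- t)%R)%C (- x) x = CInt (fun t => F t * u t)%C (- x) x).
    { rewrite <- (cint_refl (fun t => F t * u t)%C x) by (intros; cc).
      apply (@RInt_ext C_R_CompleteNormedModule). intros t _. rewrite Feven. reflexivity. }
    assert (HP2 : cisint dP (- x) x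
      (- (CInt (fun t => k t * U t)%C (- x) x - CInt (fun t => k (- t)%R * U t)%C (- x) x)
       + CInt (fun t => F t * u t)%C (- x) x + CInt (fun t => F t * u (- t)%R)%C (- x) x)%C).
    { apply (cisint_ext (fun t => (- (k t * U t - k (- t)%R * U t) + F t * u t + F t * u (- t)%R)%C)).
      intros t. unfold dP, D. ring.
      apply cisint_plus. apply cisint_plus.
      apply (@is_RInt_opp C_R_NormedModule). apply cisint_minus.
      apply cint_correct; intros; cc. apply cint_correct; intros; cc.
      apply cint_correct; intros; cc. apply cint_correct; intros; cc. }
    apply cint_unique in HP. apply cint_unique in HP2. rewrite HP in HP2.
    rewrite C1, C2 in HP2. clear -HP2.
    change (@minus C_R_NormedModule ?p ?q) with (p - q)%C in HP2.
    revert HP2.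
    generalize (CInt (fun t => F t * u t)%C (- x) x) (CInt (fun t => k t * U t)%C (- x) x).
    intros [a1 a2] [b1 b2] E. injection E. intros. apply Ceq; simpl in *; lra. }
  assert (EL : CInt (fun t => (h2/2 + k t + h2/2 * F t) * u t)%C (-x) x
     = (h2/2 * CInt u (-x) x + CInt (fun t => k t * u t)%C (-x) x + h2/2 * CInt (fun t => F t * u t)%C (-x) x)%C).
  { apply cint_unique.
    apply (cisint_ext (fun t => (h2/2 * u t + k t * u t + h2/2 * (F t * u t)))%C).
    intros t. ring.
    apply cisint_plus. apply cisint_plus.
    apply cisint_mult_l. apply cint_correct; intros; cc.
    apply cint_correct; intros; cc.
    apply cisint_mult_l. apply cint_correct; intros; cc. }
  assert (ER : CInt (fun t => (h1/2 + k t + h1/2*F t) * (u t + (h2-h1)/2 * U t))%C (-x) x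
     = (h1/2 * CInt u (-x) x + CInt (fun t => k t * u t)%C (-x) x + h1/2 * CInt (fun t => F t * u t)%C (-x) x
        + (h2-h1)/2 * (h1/2 * CInt U (-x) x + CInt (fun t => k t * U t)%C (-x) x + h1/2 * CInt (fun t => F t * U t)%C (-x) x))%C).
  { apply cint_unique.
    apply (cisint_ext (fun t => (h1/2 * u t + k t * u t + h1/2 * (F t * u t)
        + (h2-h1)/2 * (h1/2 * U t + k t * U t + h1/2 * (F t * U t))))%C).
    intros t. ring.
    apply cisint_plus. apply cisint_plus. apply cisint_plus.
    apply cisint_mult_l. apply cint_correct; intros; cc.
    apply cint_correct; intros; cc.
    apply cisint_mult_l. apply cint_correct; intros; cc.
    apply cisint_mult_l. apply cisint_plus. apply cisint_plus.
    apply cisint_mult_l. apply cint_correct; intros; cc.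
    apply cint_correct; intros; cc.
    apply cisint_mult_l. apply cint_correct; intros; cc. }
  rewrite EL, ER, B1, B3, Key. unfold U. unfold Cdiv, Cminus. ring.
Qed.

Definition cl (b t : R) := (Rabs (t + b) - Rabs (t - b)) * / 2.

Lemma cl_in b t : 0 <= b -> - b <= cl b t <= b.
Proof. intros. unfold cl. split_Rabs; lra. Qed.
Lemma cl_id b t : - b <= t <= b -> cl b t = t.
Proof. intros. unfold cl. split_Rabs; lra. Qed.
Lemma cl_cont b t : continuous (cl b) t.
Proof.
  unfold cl. apply (rcont_mult (fun s => Rabs (s + b) - Rabs (s - b)) (fun _ => / 2)).
  apply rcont_minus; apply continuous_Rabs_comp.
  apply rcont_plus. apply continuous_id. apply continuous_const.
  apply rcont_minus. apply continuous_id. apply continuous_const.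
  apply continuous_const.
Qed.

Lemma cont_within (f : R -> C) (g : R -> R) (P : R -> Prop) z :
  (forall s, P (g s)) -> continuous g z ->
  filterlim f (within P (locally (g z))) (locally (f (g z))) ->
  ccont (fun s => f (g s)) z.
Proof.
  intros HP Hg Hf. unfold ccont, continuous.
  apply (filterlim_comp _ _ _ g f _ (within P (locally (g z)))).
  - intros Q HQ. unfold within in HQ. apply Hg in HQ. unfold filtermap in *.
    revert HQ. apply filter_imp. intros s Hs. apply Hs. apply HP.
  - exact Hf.
Qed.

Lemma cont_within2 (f : R * R -> C) (g : R -> R * R) (P : R * R -> Prop) z :
  (forall s, P (g s)) -> @continuous R_UniformSpace (prod_UniformSpace R_UniformSpace R_UniformSpace) g z ->
  filterlim f (within P (locally (g z))) (locally (f (g z))) ->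
  ccont (fun s => f (g s)) z.
Proof.
  intros HP Hg Hf. unfold ccont, continuous.
  apply (filterlim_comp _ _ _ g f _ (within P (locally (g z)))).
  - intros Q HQ. unfold within in HQ. apply Hg in HQ. unfold filtermap in *.
    revert HQ. apply filter_imp. intros s Hs. apply Hs. apply HP.
  - exact Hf.
Qed.

Lemma int2 (f g : R -> C) b t1 t2 : (forall s, - b < s < b -> f s = g s) ->
  - b <= t1 <= b -> - b <= t2 <= b -> CInt f t1 t2 = CInt g t1 t2.
Proof.
  intros E H1 H2. apply (@RInt_ext C_R_CompleteNormedModule). intros s Hs. apply E.
  unfold Rmin, Rmax in Hs. destruct (Rle_dec t1 t2); lra.
Qed.

Lemma reduce (a : R) (q : R -> C) (H : R -> R -> C) h1 h2 u x :
  0 < a -> GoursatSol a q H -> contOn a u -> inI a x ->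
  Th H h2 u x = Th H h1 (fun y => (u y + (h2 - h1) / 2 * CInt u (- y) y)%C) x.
Proof.
  intros Ha HG Hu Hx.
  destruct HG as [Hc _].
  pose (b := Rabs x).
  assert (Hb : 0 <= b) by apply Rabs_pos.
  assert (Hba : b <= a) by (unfold b, inI in *; split_Rabs; lra).
  assert (Hxb : - b <= x <= b) by (unfold b; split_Rabs; lra).
  pose (ut := fun t => u (cl b t)).
  pose (kt := fun t => Kker H x (cl b t)).
  assert (Hut : forall z, ccont ut z).
  { intros z. apply (cont_within u (cl b) (inI a)).
    intros s. generalize (cl_in b s Hb); unfold inI; lra.
    apply cl_cont. apply Hu. generalize (cl_in b z Hb); unfold inI; lra. }
  assert (Hkt : forall z, ccont kt z).
  { intros z.
    pose (g := fun t => ((x + cl b t) / 2, (x - cl b t) / 2)).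
    change (ccont (fun s => (fun p : R * R => H (fst p) (snd p)) (g s)) z).
    assert (Gd : forall s, GDom a (fst (g s)) (snd (g s))).
    { intros s. generalize (cl_in b s Hb). unfold GDom, g, b in *; simpl. intros Hs.
      replace ((x + cl (Rabs x) s) / 2 + (x - cl (Rabs x) s) / 2) with x by field.
      split. lra. split_Rabs; nra. }
    apply (cont_within2 _ g (fun p => GDom a (fst p) (snd p))).
    exact Gd.
    apply cont_pair; unfold Rdiv.
    apply rcont_mult. apply rcont_plus. apply continuous_const. apply cl_cont. apply continuous_const.
    apply rcont_mult. apply rcont_minus. apply continuous_const. apply cl_cont. apply continuous_const.
    destruct (Gd z) as [G1 G2]. exact (Hc _ _ (conj G1 G2)). }
  assert (G := general x ut kt h1 h2 Hut Hkt).
  assert (EF : forall t, - b <= t <= b -> CInt (fun s => kt s - kt (- s)%R)%C t x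
                                       = CInt (fun s => Kker H x s - Kker H x (- s)%R)%C t x).
  { intros t Ht. apply (int2 _ _ b); auto. intros s Hs. unfold kt. rewrite !cl_id by lra. reflexivity. }
  assert (EU : forall t, - b <= t <= b -> CInt ut (- t) t = CInt u (- t) t).
  { intros t Ht. apply (int2 _ _ b); try lra. intros s Hs. unfold ut. rewrite cl_id by lra. reflexivity. }
  assert (Eux : ut x = u x) by (unfold ut; rewrite cl_id; auto).
  unfold Th, Kh. cbv beta.
  rewrite <- Eux, <- (EU x Hxb).
  replace (CInt (fun t => ((h2 / 2 + Kker H x t + h2 / 2 * CInt (fun s => Kker H x s - Kker H x (- s)) t x) * u t)%C) (- x) x)
    with (CInt (fun t => ((h2 / 2 + kt t + h2 / 2 * CInt (fun s => kt s - kt (- s)%R) t x) * ut t)%C) (- x) x).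
  replace (CInt (fun t => ((h1 / 2 + Kker H x t + h1 / 2 * CInt (fun s => Kker H x s - Kker H x (- s)) t x) * (u t + (h2 - h1) / 2 * CInt u (- t) t))%C) (- x) x)
    with (CInt (fun t => ((h1 / 2 + kt t + h1 / 2 * CInt (fun s => kt s - kt (- s)%R) t x) * (ut t + (h2 - h1) / 2 * CInt ut (- t)%R t))%C) (- x) x).
  exact G.
  - apply (int2 _ _ b); try lra. intros t Ht. rewrite EF, EU by lra. unfold ut, kt. rewrite cl_id by lra. reflexivity.
  - apply (int2 _ _ b); try lra. intros t Ht. rewrite EF by lra. unfold ut, kt. rewrite cl_id by lra. reflexivity.
Qed.

Theorem mainTheorem2 :
  forall (a : R) (q : R -> C) (H : R -> R -> C),
    0 < a -> contOn a q -> GoursatSol a q H ->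
    (forall (h1 h2 : C) (u : R -> C), contOn a u ->
       forall x, inI a x ->
         Th H h2 u x
         = Th H h1 (fun y => (u y + (h2 - h1) / 2 * CInt u (- y) y)%C) x) /\
    (forall (h : C) (u : R -> C), contOn a u ->
       forall x, inI a x ->
         Th H h u x
         = Th H 0%C (fun y => (u y + h / 2 * CInt u (- y) y)%C) x).
Proof.
  intros a q H Ha Hq HG. split.
  - intros h1 h2 u Hu x Hx. apply (reduce a q); assumption.
  - intros h u Hu x Hx. rewrite (reduce a q H 0%C h u x Ha HG Hu Hx).
    replace ((h - 0) / 2)%C with (h / 2)%C by (unfold Cdiv, Cminus; ring).
    reflexivity.
Qed.
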